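(* Let $\mathcal{X}\subseteq\mathbb{R}^d$ be nonempty, closed and convex, let $f:\mathbb{R}^d\to\mathbb{R}$ be convex, and let $\mathcal{X}_\star:=\operatorname{arg\,min}_{x\in\mathcal{X}}f(x)$. Let $x_k\in\mathcal{X}$ and $x_\star\in\mathcal{X}_\star$. Assume $g_k\in\partial f(x_k)$, $0\notin\partial f(x_k)$, and $0<t_k\le\frac{\langle g_k,x_k-x_\star\rangle}{\|g_k\|}$. Let $x_{k+1}\in\operatorname{arg\,min}_{z\in\mathcal{X}\cap\mathcal{B}(x_k,t_k)}\langle g_k,z\rangle$. Then $\|x_k-x_\star\|\ge t_k$, $\|x_{k+1}-x_k\|=t_k$, and $\|x_{k+1}-x_\star\|^2\le\|x_k-x_\star\|^2-t_k^2$.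
   Context: $\partial f(x)$ is the convex subdifferential. $\|\cdot\|$ is the Euclidean norm, $\mathcal{B}(x,t):=\{y:\|y-x\|\le t\}$. *)

(* Defs.v *)
From HB Require Import structures.
From mathcomp Require Import all_boot all_order all_algebra.
From mathcomp Require Import all_classical all_reals all_analysis.
Set Implicit Arguments. Unset Strict Implicit. Unset Printing Implicit Defensive.
Import Order.TTheory GRing.Theory Num.Theory.
Import numFieldNormedType.Exports.
Local Open Scope classical_set_scope.
Local Open Scope ring_scope.

Definition dotp {R : realType} {d : nat} (u v : 'rV[R]_d) : R :=
  \sum_(i < d) u 0 i * v 0 i.
Definition enorm {R : realType} {d : nat} (u : 'rV[R]_d) : R :=
  Num.sqrt (dotp u u).

Definition eball {R : realType} {d : nat} (x : 'rV[R]_d) (t : R) : set 'rV[R]_d :=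
  [set y | enorm (y - x) <= t].

Definition convex_fun {R : realType} {d : nat} (f : 'rV[R]_d -> R) : Prop :=
  forall x y (l : R), 0 <= l <= 1 ->
    f (l *: x + (1 - l) *: y) <= l * f x + (1 - l) * f y.

Definition subdiff {R : realType} {d : nat} (f : 'rV[R]_d -> R) (x : 'rV[R]_d)
  : set 'rV[R]_d :=
  [set g | forall y, f x + dotp g (y - x) <= f y].

Definition argmin_on {R : realType} {d : nat} (phi : 'rV[R]_d -> R)
  (A : set 'rV[R]_d) : set 'rV[R]_d :=
  [set x | A x /\ forall y, A y -> phi x <= phi y].

(* Main.v *)
Require Import Defs.
From HB Require Import structures.
From mathcomp Require Import all_boot all_order all_algebra.
From mathcomp Require Import all_classical all_reals all_analysis.
From mathcomp Require Import ring lra.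
Import Order.TTheory GRing.Theory Num.Theory.
Import numFieldNormedType.Exports.
Local Open Scope classical_set_scope.
Local Open Scope ring_scope.

Lemma convX {R : realType} {d : nat} (X : set 'rV[R]_d) (x y : 'rV[R]_d) (s : R) :
  convex_set X -> X x -> X y -> 0 <= s -> s <= 1 -> X (s *: x + (1 - s) *: y).
Proof.
move=> cX Xx Xy s0 s1.
have := cX x y (Itv01 s0 s1).
rewrite !inE => /(_ Xx Xy). by [].
Qed.

Lemma dotpC {R : realType} {d : nat} (u v : 'rV[R]_d) : dotp u v = dotp v u.
Proof. by rewrite /dotp; apply: eq_bigr => i _; rewrite mulrC. Qed.

Lemma dotpDl {R : realType} {d : nat} (u v w : 'rV[R]_d) :
  dotp (u + v) w = dotp u w + dotp v w.
Proof. by rewrite /dotp -big_split; apply: eq_bigr => i _; rewrite !mxE mulrDl. Qed.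

Lemma dotpZl {R : realType} {d : nat} (a : R) (u v : 'rV[R]_d) :
  dotp (a *: u) v = a * dotp u v.
Proof. by rewrite /dotp mulr_sumr; apply: eq_bigr => i _; rewrite !mxE mulrA. Qed.

Lemma dotpNl {R : realType} {d : nat} (u v : 'rV[R]_d) :
  dotp (- u) v = - dotp u v.
Proof. by rewrite /dotp -sumrN; apply: eq_bigr => i _; rewrite !mxE mulNr. Qed.

Lemma dotpBl {R : realType} {d : nat} (u v w : 'rV[R]_d) :
  dotp (u - v) w = dotp u w - dotp v w.
Proof. by rewrite dotpDl dotpNl. Qed.

Lemma dotpDr {R : realType} {d : nat} (u v w : 'rV[R]_d) :
  dotp w (u + v) = dotp w u + dotp w v.
Proof. by rewrite dotpC dotpDl !(dotpC w). Qed.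

Lemma dotpZr {R : realType} {d : nat} (a : R) (u v : 'rV[R]_d) :
  dotp v (a *: u) = a * dotp v u.
Proof. by rewrite dotpC dotpZl dotpC. Qed.

Lemma dotpBr {R : realType} {d : nat} (u v w : 'rV[R]_d) :
  dotp w (u - v) = dotp w u - dotp w v.
Proof. by rewrite dotpC dotpBl !(dotpC w). Qed.

Lemma dotpNr {R : realType} {d : nat} (u v : 'rV[R]_d) :
  dotp v (- u) = - dotp v u.
Proof. by rewrite dotpC dotpNl dotpC. Qed.

Lemma dotpp_ge0 {R : realType} {d : nat} (u : 'rV[R]_d) : 0 <= dotp u u.
Proof. by rewrite /dotp; apply: sumr_ge0 => i _; rewrite -expr2 sqr_ge0. Qed.

Lemma enorm_ge0 {R : realType} {d : nat} (u : 'rV[R]_d) : 0 <= enorm u.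
Proof. exact: sqrtr_ge0. Qed.

Lemma enorm2 {R : realType} {d : nat} (u : 'rV[R]_d) : enorm u ^+ 2 = dotp u u.
Proof. by rewrite /enorm sqr_sqrtr // dotpp_ge0. Qed.

Lemma CS {R : realType} {d : nat} (u v : 'rV[R]_d) :
  dotp u v <= enorm u * enorm v.
Proof.
have K : forall l : R, 2 * l * dotp u v <= l ^+ 2 * dotp u u + dotp v v.
  move=> l; have := dotpp_ge0 (l *: u - v).
  rewrite !dotpBl !dotpBr !dotpZl !dotpZr (dotpC v u); nra.
have A0 := enorm_ge0 u; have B0 := enorm_ge0 v.
have A2 := enorm2 u; have B2 := enorm2 v.
set A := enorm u in A0 A2 *; set B := enorm v in B0 B2 *.
set p := dotp u v in K *.
have [p0|p0] := lerP p 0; first by nra.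
have [Az|Ap] := eqVneq A 0.
  have := K ((B ^+ 2 + 1) / p).
  rewrite -A2 -B2 Az.
  have -> : 2 * ((B ^+ 2 + 1) / p) * p = 2 * (B ^+ 2 + 1).
    by field; rewrite gt_eqF.
  nra.
have Apos : 0 < A by rewrite lt_neqAle eq_sym Ap A0.
have := K (p / A ^+ 2).
rewrite -A2 -B2.
have -> : (p / A ^+ 2) ^+ 2 * A ^+ 2 = p ^+ 2 / A ^+ 2.
  by field; rewrite gt_eqF.
have -> : 2 * (p / A ^+ 2) * p = 2 * (p ^+ 2 / A ^+ 2).
  by field; rewrite gt_eqF.
move=> h.
have h2 : p ^+ 2 / A ^+ 2 <= B ^+ 2 by lra.
have h3 : p ^+ 2 <= B ^+ 2 * A ^+ 2.
  by move: h2; rewrite ler_pdivrMr // exprn_gt0.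
rewrite leNgt; apply/negP => hlt.
have hAB : 0 <= A * B by rewrite mulr_ge0.
have : 0 < (p - A * B) * (p + A * B) by rewrite mulr_gt0 //; lra.
nra.
Qed.

Lemma dotp_expand {R : realType} {d : nat} (a v : 'rV[R]_d) (s : R) :
  dotp (a + s *: v) (a + s *: v) = dotp a a + 2 * s * dotp a v + s ^+ 2 * dotp v v.
Proof. rewrite !dotpDl !dotpDr !dotpZl !dotpZr (dotpC v a); ring. Qed.

Lemma small_s {R : realType} (dl p q : R) :
  0 <= dl -> 0 <= q -> (0 < dl \/ p < 0) ->
  exists s, [/\ 0 < s, s <= 1 & 2 * s * p + s ^+ 2 * q <= dl].
Proof.
move=> d0 q0 [dp|pn].
  have n0 := normr_ge0 p; have np := ler_norm p.
  set r := `|p| in n0 np.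
  have D : 0 < dl + 2 * r + q by lra.
  exists (dl / (dl + 2 * r + q)).
  have s0 : 0 < dl / (dl + 2 * r + q) by rewrite divr_gt0.
  have s1 : dl / (dl + 2 * r + q) <= 1 by rewrite ler_pdivrMr //; lra.
  split => //.
  set s := dl / _ in s0 s1 *.
  have e : s * (dl + 2 * r + q) = dl by rewrite /s mulrVK ?unitf_gt0 //; field; rewrite gt_eqF.
  nra.
have D : 0 < q - p + 1 by lra.
exists (- p / (q - p + 1)).
have s0 : 0 < - p / (q - p + 1) by rewrite divr_gt0 //; lra.
have s1 : - p / (q - p + 1) <= 1 by rewrite ler_pdivrMr //; lra.
split => //.
set s := - p / _ in s0 s1 *.
have e : s * (q - p + 1) = - p by rewrite /s; field; rewrite gt_eqF.
nra.
Qed.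

Theorem proposition7 (R : realType) (d : nat) (X : set 'rV[R]_d)
  (f : 'rV[R]_d -> R) (xk xstar gk xk1 : 'rV[R]_d) (tk : R) :
  X !=set0 -> closed X -> convex_set X -> convex_fun f ->
  X xk -> argmin_on f X xstar ->
  subdiff f xk gk -> ~ subdiff f xk 0 ->
  0 < tk -> tk <= dotp gk (xk - xstar) / enorm gk ->
  argmin_on (dotp gk) (X `&` eball xk tk) xk1 ->
  [/\ enorm (xk - xstar) >= tk,
      enorm (xk1 - xk) = tk &
      enorm (xk1 - xstar) ^+ 2 <= enorm (xk - xstar) ^+ 2 - tk ^+ 2].
Proof.
move=> _ _ cX _ Xxk [Xxs _] _ _ tk0 htk [[Xx1 Bx1] opt].
have G0 := enorm_ge0 gk.
have Gpos : 0 < enorm gk.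
  rewrite lt_neqAle G0 andbT; apply/eqP => G0'.
  by move: htk; rewrite -G0' invr0 mulr0; lra.
have hc : tk * enorm gk <= dotp gk (xk - xstar) by rewrite -ler_pdivlMr.
have seg : forall z, X z ->
    (dotp (xk1 - xk) (xk1 - xk) < tk ^+ 2 \/ dotp (xk1 - xk) (z - xk1) < 0) ->
    0 <= dotp gk (z - xk1).
  move=> z Xz H.
  have a2 : dotp (xk1 - xk) (xk1 - xk) <= tk ^+ 2.
    have := enorm2 (xk1 - xk); have := enorm_ge0 (xk1 - xk).
    move: Bx1; rewrite /eball /=; nra.
  have dl0 : 0 <= tk ^+ 2 - dotp (xk1 - xk) (xk1 - xk) by lra.
  have dlH : 0 < tk ^+ 2 - dotp (xk1 - xk) (xk1 - xk) \/ dotp (xk1 - xk) (z - xk1) < 0.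
    by case: H => h; [left; lra | right].
  have [s [s0 s1 hs]] := @small_s _ _ _ _ dl0 (dotpp_ge0 (z - xk1)) dlH.
  have Xw := @convX _ _ X z xk1 s cX Xz Xx1 (ltW s0) s1.
  have ew : s *: z + (1 - s) *: xk1 = xk1 + s *: (z - xk1).
    by rewrite scalerBl scale1r scalerBr; rewrite addrC -!addrA; congr (_ + _); rewrite addrC.
  rewrite ew in Xw.
  have Bw : eball xk tk (xk1 + s *: (z - xk1)).
    rewrite /eball /=.
    have -> : xk1 + s *: (z - xk1) - xk = (xk1 - xk) + s *: (z - xk1).
      by rewrite addrAC.
    have := enorm2 ((xk1 - xk) + s *: (z - xk1));
    have := enorm_ge0 ((xk1 - xk) + s *: (z - xk1)).
    rewrite dotp_expand.
    set n := enorm _; nra.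
  have := opt _ (conj Xw Bw).
  rewrite dotpDr dotpZr => h.
  have : 0 <= s * dotp gk (z - xk1) by lra.
  by rewrite pmulr_rge0.
have CSg := CS gk.
have e1 := enorm2 (xk - xstar); have n1 := enorm_ge0 (xk - xstar).
have e2 := enorm2 (xk1 - xk); have n2 := enorm_ge0 (xk1 - xk).
have e3 := enorm2 (xk1 - xstar); have n3 := enorm_ge0 (xk1 - xstar).
have Bx1' : enorm (xk1 - xk) <= tk by [].
have part1 : tk <= enorm (xk - xstar).
  have := CSg (xk - xstar); nra.
have decomp1 : dotp gk (xk - xk1) = dotp gk (xk - xstar) + dotp gk (xstar - xk1).
  by rewrite -dotpDr addrA subrK.
have part2 : enorm (xk1 - xk) = tk.
  apply/eqP; rewrite eq_le Bx1' /=; rewrite leNgt; apply/negP => hlt.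
  have hh : dotp (xk1 - xk) (xk1 - xk) < tk ^+ 2.
    have : 0 < (tk - enorm (xk1 - xk)) * (tk + enorm (xk1 - xk)) by rewrite mulr_gt0 //; lra.
    nra.
  have := seg xstar Xxs (or_introl hh).
  have := CSg (xk - xk1).
  have -> : enorm (xk - xk1) = enorm (xk1 - xk).
    by rewrite -opprB /enorm dotpNl dotpC dotpNl opprK.
  nra.
split => //.
set a := xk1 - xk in e2 n2 part2 seg Bx1' *.
set v := xstar - xk1 in decomp1 seg *.
have hD : xk - xstar = - (a + v) by rewrite /a /v [in RHS]addrC [in RHS]addrA subrK opprB.
have hv : xk1 - xstar = - v by rewrite /v opprB.
have hav : 0 <= dotp a v.
  rewrite leNgt; apply/negP => hneg.
  have gv := seg xstar Xxs (or_intror hneg).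
  have hxa : xk - xk1 = - a by rewrite /a opprB.
  rewrite hxa dotpNr in decomp1.
  have := CSg (- a).
  have -> : enorm (- a) = enorm a by rewrite /enorm dotpNl dotpC dotpNl opprK.
  rewrite dotpNr => ha.
  have gv0 : dotp gk v = 0 by nra.
  set w := enorm gk *: a + tk *: gk.
  have w0 : dotp w w = 0.
    apply/eqP; rewrite eq_le dotpp_ge0 andbT.
    have ga : dotp gk a = - (tk * enorm gk) by rewrite part2 in ha; nra.
    rewrite /w !dotpDl !dotpDr !dotpZl !dotpZr (dotpC a gk) -(enorm2 a) -(enorm2 gk) part2 ga.
    have -> : forall G t : R, G * (G * t ^+ 2) + G * (t * - (t * G)) +
       (t * (G * - (t * G)) + t * (t * G ^+ 2)) = 0 by move=> G t; ring.
    by [].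
  have wn : enorm w = 0 by rewrite /enorm w0 sqrtr0.
  have c1 := CS w v; have c2 := CS (- w) v.
  have nw : enorm (- w) = enorm w by rewrite /enorm dotpNl dotpC dotpNl opprK.
  rewrite nw wn mul0r dotpNl in c2; rewrite wn mul0r in c1.
  have : dotp w v = 0 by lra.
  rewrite /w dotpDl !dotpZl gv0 mulr0 addr0 => /eqP; rewrite mulf_eq0 => /orP [] /eqP h.
    by move: Gpos; rewrite h ltxx.
  by move: hneg; rewrite h ltxx.
clearbody a v.
have ex : dotp (- (a + v)) (- (a + v)) = dotp a a + 2 * dotp a v + dotp v v.
  by rewrite dotpNl dotpNr opprK dotpDl !dotpDr (dotpC v a); ring.
have ev : dotp (- v) (- v) = dotp v v by rewrite dotpNl dotpNr opprK.
rewrite e1 e3 hD hv ex ev -e2 part2.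
move: hav; generalize (dotp a v) (dotp v v) tk => x y t; lra.
Qed.
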